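(* Let $1 \le q \le w$ be integers and let $Q$ be a subset of $[w]$ of size $q$. Let $Y$ and $Z$ be two finite totally ordered sets and let $A_1,\ldots, A_r$ be $q$-element subsets of $Y$. If $|Z| \ge |Y| + r(w-q)$, then there exist an injection $\pi\colon Y \to Z$ and $r$ subsets $W_1,\ldots, W_r$ of $Z$, each of size $w$, such that for every $i \in [r]$, $Q$ selects $\pi(A_i)$ in $W_i$. Moreover, one can further require that $W_i \cap W_j = \pi(A_i \cap A_j)$ for any $i\neq j\in[r]$.
   Context: $[w]=\{1,\dots,w\}$. If $e_1<e_2<\dots<e_w$ are the elements of a totally ordered set $W$ and $Q\subseteq[w]$, the subset selected by $Q$ in $W$ is $\{e_i : i\in Q\}$. For a map $\pi$ and a set $A$, $\pi(A)=\{\pi(a):a\in A\}$. *)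

(* Defs.v *)
From mathcomp Require Import all_boot all_order.
Set Implicit Arguments. Unset Strict Implicit. Unset Printing Implicit Defensive.
Import Order.TTheory.
Local Open Scope order_scope.

Definition sorted_elems (d : Order.disp_t) (T : finOrderType d) (W : {set T})
  : seq T := sort <=%O (enum W).

(* The subset selected by Q in W: { e_i : i in Q }.  Q is a subset of 'I_w,
   where the ordinal k : 'I_w stands for the index k+1 of [w]. *)
Definition selected (d : Order.disp_t) (T : finOrderType d) (w : nat)
  (Q : {set 'I_w}) (W : {set T}) : {set T} :=
  [set x in W | [exists k in Q, index x (sorted_elems W) == nat_of_ord k]].

(* Main.v *)
Require Import Defs.
From mathcomp Require Import all_boot all_order.
From mathcomp Require Import zify.
Set Implicit Arguments. Unset Strict Implicit. Unset Printing Implicit Defensive.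
Import Order.TTheory.

Lemma rank_lt (T : finType) (lt : rel T) (S : {set T}) x y :
  transitive lt -> irreflexive lt -> x \in S -> lt x y ->
  #|[set z in S | lt z x]| < #|[set z in S | lt z y]|.
Proof.
move=> tr irr xS xy; apply: proper_card; rewrite properE; apply/andP; split.
  apply/subsetP => z; rewrite !inE => /andP[zS zx]; rewrite zS /=.
  exact: (tr x z y zx xy).
apply/subsetPn; exists x; rewrite !inE ?xS ?xy ?irr //.
Qed.

Lemma rank_bound (T : finType) (lt : rel T) (S : {set T}) x :
  irreflexive lt -> x \in S -> #|[set z in S | lt z x]| < #|S|.
Proof.
move=> irr xS; apply: proper_card; rewrite properE; apply/andP; split.
  by apply/subsetP => z; rewrite !inE => /andP[].
by apply/subsetPn; exists x => //; rewrite !inE ?xS ?irr.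
Qed.

Definition pk (B x y : nat) := x * B + y.

Lemma pk_lt B x y x' y' : y < B -> y' < B ->
  (x < x' \/ (x = x' /\ y < y')) -> pk B x y < pk B x' y'.
Proof. rewrite /pk => hy hy' [h|[-> h]]; nia. Qed.

Lemma pk_inj B x y x' y' : y < B -> y' < B ->
  pk B x y = pk B x' y' -> x = x' /\ y = y'.
Proof.
move=> hy hy' e; case: (ltngtP x x') => h.
- by have := pk_lt hy hy' (or_introl h); rewrite e ltnn.
- by have := pk_lt hy' hy (or_introl h); rewrite e ltnn.
- by subst; split=> //; move: e; rewrite /pk => /addnI.
Qed.

Lemma pk_bound B X x y : y < B -> x < X -> pk B x y < X * B.
Proof. rewrite /pk; nia. Qed.

Definition E (r w a s i p : nat) := pk w (pk r.+1 (pk 3 a s) i) p.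

Lemma E_inj r w a s i p a' s' i' p' : s < 3 -> s' < 3 -> i < r.+1 -> i' < r.+1 ->
  p < w -> p' < w -> E r w a s i p = E r w a' s' i' p' ->
  [/\ a = a', s = s', i = i' & p = p'].
Proof.
move=> hs hs' hi hi' hp hp' /pk_inj-/(_ hp hp')[/pk_inj-/(_ hi hi')[/pk_inj-/(_ hs hs')]].
by move=> [-> ->] -> ->.
Qed.

Lemma E_lt1 r w a s i p a' s' i' p' : s < 3 -> s' < 3 -> i < r.+1 -> i' < r.+1 ->
  p < w -> p' < w -> (a < a' \/ (a = a' /\ s < s')) ->
  E r w a s i p < E r w a' s' i' p'.
Proof.
move=> hs hs' hi hi' hp hp' h; apply: pk_lt => //; left; apply: pk_lt => //; left.
exact: pk_lt.
Qed.

Lemma E_le r w a s i p a' s' i' p' : s < 3 -> s' < 3 -> i < r.+1 -> i' < r.+1 ->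
  p < w -> p' < w -> a <= a' -> s < s' ->
  E r w a s i p < E r w a' s' i' p'.
Proof.
move=> hs hs' hi hi' hp hp'; rewrite leq_eqVlt => /orP[/eqP->|h] hss;
  apply: E_lt1 => //; by [right|left].
Qed.

Lemma E_lt3 r w a s i p p' : s < 3 -> i < r.+1 -> p < w -> p' < w -> p < p' ->
  E r w a s i p < E r w a s i p'.
Proof. by move=> hs hi hp hp' h; apply: pk_lt => //; right. Qed.

Lemma E_bound r w a s i p X : s < 3 -> i < r.+1 -> p < w -> a < X ->
  E r w a s i p < X * 3 * r.+1 * w.
Proof.
move=> hs hi hp ha; apply: pk_bound => //; apply: pk_bound => //; exact: pk_bound.
Qed.

Lemma sel_map d (T : finOrderType d) w (Q : {set 'I_w}) (f : 'I_w -> T) :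
  (forall p p' : 'I_w, p < p' -> (f p < f p')%O) ->
  selected Q [set f p | p : 'I_w] = f @: Q.
Proof.
move=> mono.
have finj : injective f.
  move=> p p' e; apply/val_inj; case: (ltngtP p p') => // h.
    by have := mono _ _ h; rewrite e ltxx.
  by have := mono _ _ h; rewrite e ltxx.
have se : sorted_elems [set f p | p : 'I_w] = map f (enum 'I_w).
  apply: lt_sorted_eq.
  - by rewrite /sorted_elems sort_lt_sorted enum_uniq.
  - apply: (homo_sorted (e := fun p p' : 'I_w => p < p') mono).
    have : sorted ltn (map val (enum 'I_w)) by rewrite val_enum_ord iota_ltn_sorted.
    by rewrite sorted_map.
  - move=> x; rewrite /sorted_elems mem_sort mem_enum.
    apply/imsetP/mapP => [[p _ ->]|[p _ ->]]; exists p => //; by rewrite mem_enum.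
apply/setP => x; rewrite /selected se !inE.
apply/andP/imsetP => [[/imsetP[p _ ->] /existsP[k /andP[kQ]]]|[p pQ ->]].
  by rewrite index_map // index_enum_ord => /eqP/val_inj->; exists k.
split; first by apply/imsetP; exists p.
by apply/existsP; exists p; rewrite pQ /= index_map // index_enum_ord.
Qed.

Theorem lemma29 (q w r : nat) (Q : {set 'I_w})
  (dY dZ : Order.disp_t) (Y : finOrderType dY) (Z : finOrderType dZ)
  (A : 'I_r -> {set Y}) :
  1 <= q -> q <= w -> #|Q| = q ->
  (forall i, #|A i| = q) ->
  #|Y| + r * (w - q) <= #|Z| ->
  exists pi : Y -> Z, injective pi /\
    exists W : 'I_r -> {set Z},
      (forall i, #|W i| = w) /\
      (forall i, selected Q (W i) = pi @: A i) /\
      (forall i j, i != j -> W i :&: W j = pi @: (A i :&: A j)).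
Proof.
move=> q1 qw cQ cA cZ.
have w0 : 0 < w := leq_trans q1 qw.
case: (pickP [pred y : Y | true]) => [y0 _|Y0]; last first.
  have F : Y -> False by move=> y; have := Y0 y.
  have Fi : 'I_r -> False.
    move=> i; have : 0 < #|A i| by rewrite cA.
    by case/card_gt0P => y _; case: (F y).
  exists (fun y => False_rect _ (F y)); split; first by move=> y; case: (F y).
  exists (fun _ => set0); split; last split; by move=> i; case: (Fi i).
have : 0 < #|Z|.
  apply: leq_trans cZ; apply: leq_trans (leq_addr _ _).
  by apply/card_gt0P; exists y0.
case/card_gt0P => z0 _.
pose tQ (p : 'I_w) := #|[set k in Q | (k < p)%N]|.
have ltr_tr : transitive (fun a b : 'I_w => (a < b)%N).
  by move=> b a0 c /= h1 h2; apply: ltn_trans h1 h2.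
have ltr_irr : irreflexive (fun a b : 'I_w => (a < b)%N) by move=> a /=; rewrite ltnn.
have tQ_le (p p' : 'I_w) : p <= p' -> tQ p <= tQ p'.
  move=> h; apply: subset_leq_card; apply/subsetP => k; rewrite !inE.
  by case/andP=> -> kp; apply: leq_trans kp h.
have tQ_lt (p p' : 'I_w) : p \in Q -> p < p' -> tQ p < tQ p'.
  by move=> pQ h; apply: (rank_lt ltr_tr ltr_irr pQ h).
have tQ_q (p : 'I_w) : tQ p <= q.
  by rewrite -cQ; apply: subset_leq_card; apply/subsetP => k; rewrite inE => /andP[].
have tQ_in (p : 'I_w) : p \in Q -> tQ p < q.
  by move=> pQ; rewrite -cQ; apply: (rank_bound ltr_irr pQ).
pose rk (y : Y) := #|[set z in [set: Y] | (z < y)%O]|.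
have rk_lt (y y' : Y) : (y < y')%O -> rk y < rk y'.
  by move=> h; apply: (rank_lt (@lt_trans _ _) (@ltxx _ _) _ h); rewrite inE.
have rk_b (y : Y) : rk y < #|Y|.
  by rewrite -cardsT; apply: (rank_bound (@ltxx _ _)); rewrite inE.
have rk_inj : injective rk.
  move=> y y' e; case: (ltgtP y y') => // h.
    by have := rk_lt _ _ h; rewrite e ltnn.
  by have := rk_lt _ _ h; rewrite e ltnn.
pose sA i := sorted_elems (A i).
pose a i t := nth y0 (sA i) t.
have sA_size (i : 'I_r) : size (sA i) = q by rewrite /sA /sorted_elems size_sort -cardE cA.
have sA_sorted (i : 'I_r) : sorted <%O (sA i) by rewrite /sA /sorted_elems sort_lt_sorted enum_uniq.
have a_in (i : 'I_r) t : t < q -> a i t \in A i.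
  by move=> ht; rewrite -mem_enum -(mem_sort <=%O) /a; apply: mem_nth; rewrite sA_size.
have ra_lt (i : 'I_r) t t' : t < t' -> t' < q -> rk (a i t) < rk (a i t').
  move=> h h'; apply: rk_lt; have := lt_sorted_ltn_nth y0 (sA_sorted i).
  move=> /(_ t t'); rewrite !inE sA_size h' (ltn_trans h h') => /(_ isT isT) ->.
  exact: h.
have ra_le (i : 'I_r) t t' : t <= t' -> t' < q -> rk (a i t) <= rk (a i t').
  rewrite leq_eqVlt => /orP[/eqP->//|h] h'; exact/ltnW/ra_lt.
pose phi (i : 'I_r) (p : 'I_w) :=
  if p \in Q then E r w (rk (a i (tQ p))) 1 0 0
  else if tQ p < q then E r w (rk (a i (tQ p))) 0 i p
  else E r w (rk (a i q.-1)) 2 i p.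
have phi_mono i (p p' : 'I_w) : p < p' -> phi i p < phi i p'.
  move=> pp'; have hi : i < r.+1 by apply: leqW.
  have hp := ltn_ord p; have hp' := ltn_ord p'.
  have tle := tQ_le _ _ (ltnW pp').
  have tqq := tQ_q p; have tqq' := tQ_q p'.
  rewrite /phi.
  case pQ : (p \in Q); case p'Q : (p' \in Q).
  - have := tQ_lt _ _ pQ pp'; have := tQ_in _ p'Q => h1 h2.
    by apply: E_lt1 => //; left; apply: ra_lt.
  - have := tQ_lt _ _ pQ pp'; have := tQ_in _ pQ => h1 h2.
    case t'q : (tQ p' < q).
      by apply: E_lt1 => //; left; apply: ra_lt.
    by apply: E_le => //; apply: ra_le; lia.
  - have := tQ_in _ p'Q => h1.
    have tq : tQ p < q by lia.
    by rewrite tq; apply: E_le => //; apply: ra_le.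
  - case tq : (tQ p < q); case t'q : (tQ p' < q).
    + case: (ltngtP (tQ p) (tQ p')) => h.
      * by apply: E_lt1 => //; left; apply: ra_lt.
      * lia.
      * by rewrite h; apply: E_lt3.
    + by apply: E_le => //; apply: ra_le; lia.
    + lia.
    + by apply: E_lt3.
pose N := #|Y| * 3 * r.+1 * w.
have Eb (y : Y) : E r w (rk y) 1 0 0 < N.
  by apply: E_bound => //; apply: leq_ltn_trans (ltn_ord (Ordinal q1)) _; lia.
have phi_b (i : 'I_r) (p : 'I_w) : phi i p < N.
  have hi : i < r.+1 by apply: leqW.
  rewrite /phi; case: ifP => _; first exact: Eb.
  by case: ifP => _; apply: E_bound.
pose S := [set (inord (E r w (rk y) 1 0 0) : 'I_N.+1) | y : Y] :|:
          [set (inord (phi ip.1 ip.2) : 'I_N.+1) | ip in setX [set: 'I_r] (~: Q)].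
have cS : #|S| <= #|Z|.
  apply: leq_trans cZ; rewrite cardsU; apply: leq_trans (leq_subr _ _) _.
  apply: leq_add; first exact: leq_imset_card.
  apply: leq_trans (leq_imset_card _ _) _.
  rewrite cardsX cardsT card_ord; apply: leq_mul => //.
  move: (cardsC Q) cQ; rewrite card_ord; set c := #|~: Q|; set d := #|Q|; lia.
have ES (y : Y) : inord (E r w (rk y) 1 0 0) \in S.
  by rewrite inE; apply/orP; left; apply/imsetP; exists y.
have phiS (i : 'I_r) (p : 'I_w) : inord (phi i p) \in S.
  case pQ : (p \in Q); first by rewrite /phi pQ; exact: ES.
  rewrite inE; apply/orP; right; apply/imsetP; exists (i, p) => //.
  by rewrite !inE pQ.
pose sZ := sorted_elems [set: Z].
have sZ_size : size sZ = #|Z| by rewrite /sZ /sorted_elems size_sort -cardE cardsT.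
have sZ_sorted : sorted <%O sZ by rewrite /sZ /sorted_elems sort_lt_sorted enum_uniq.
pose g n := nth z0 sZ #|[set m in S | (m < n)%N]|.
have ltS_tr : transitive (fun a0 b : 'I_N.+1 => (a0 < b)%N).
  by move=> b a0 c /= h1 h2; apply: ltn_trans h1 h2.
have ltS_irr : irreflexive (fun a0 b : 'I_N.+1 => (a0 < b)%N) by move=> b /=; rewrite ltnn.
have g_mono n n' : n < N -> n' < N -> inord n \in S -> inord n' \in S -> n < n' ->
    (g n < g n')%O.
  move=> hn hn' nS n'S h.
  have e1 : [set m in S | (m < n)%N] = [set m in S | (m < (inord n : 'I_N.+1))%N].
    by rewrite inordK // ltnW.
  have e2 : [set m in S | (m < n')%N] = [set m in S | (m < (inord n' : 'I_N.+1))%N].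
    by rewrite inordK // ltnW.
  have := lt_sorted_ltn_nth z0 sZ_sorted; rewrite /g e1 e2.
  move=> /(_ #|[set m in S | (m < (inord n : 'I_N.+1))%N]|
            #|[set m in S | (m < (inord n' : 'I_N.+1))%N]|).
  rewrite !inE sZ_size.
  rewrite (leq_trans (rank_bound ltS_irr nS) cS) (leq_trans (rank_bound ltS_irr n'S) cS).
  move=> /(_ isT isT) ->; apply: (rank_lt ltS_tr ltS_irr nS).
  by rewrite /= !inordK // ltnW.
have g_inj n n' : n < N -> n' < N -> inord n \in S -> inord n' \in S -> g n = g n' -> n = n'.
  move=> hn hn' nS n'S e; case: (ltngtP n n') => // h.
    by have := g_mono _ _ hn hn' nS n'S h; rewrite e ltxx.
  by have := g_mono _ _ hn' hn n'S nS h; rewrite e ltxx.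
pose pif y := g (E r w (rk y) 1 0 0).
pose psif i p := g (phi i p).
have psi_mono (j : 'I_r) (p p' : 'I_w) : p < p' -> (psif j p < psif j p')%O.
  by move=> h; apply: g_mono => //; apply: phi_mono.
have psi_inj (i : 'I_r) : injective (psif i).
  move=> p p' e; apply/val_inj; case: (ltngtP p p') => // h.
    by have := psi_mono i _ _ h; rewrite e ltxx.
  by have := psi_mono i _ _ h; rewrite e ltxx.
have pi_inj : injective pif.
  move=> y y' /g_inj-/(_ (Eb y) (Eb y') (ES y) (ES y')).
  move/E_inj => /(_ isT isT (ltn0Sn _) (ltn0Sn _)).
  by move/(_ w0 w0) => [/rk_inj].
exists pif; split => //.
have hri (k : 'I_r) : k < r.+1 by apply: leqW.
have r0 : 0 < r.+1 by [].
have selE (i : 'I_r) : selected Q [set psif i p | p : 'I_w] = pif @: A i.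
  rewrite sel_map; last exact: psi_mono.
  apply/eqP; rewrite eqEcard; apply/andP; split.
    apply/subsetP => x /imsetP[p pQ ->]; apply/imsetP; exists (a i (tQ p)).
      exact/a_in/tQ_in.
    by rewrite /psif /phi pQ.
  by rewrite !card_imset // cA cQ.
exists (fun i => [set psif i p | p : 'I_w]); split; last split.
- by move=> i; rewrite card_imset // card_ord.
- exact: selE.
- move=> i j ij; apply/setP => x; rewrite inE; apply/andP/imsetP.
  + case=> /imsetP[p _ ->] /imsetP[p' _ e].
    have := g_inj _ _ (phi_b i p) (phi_b j p') (phiS i p) (phiS j p') e.
    have hp := ltn_ord p; have hp' := ltn_ord p'.
    rewrite {1}/phi; case pQ: (p \in Q); rewrite /phi; case p'Q : (p' \in Q).
    * move/E_inj => /(_ isT isT r0 r0 w0 w0) [/rk_inj e2 _ _ _].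
      exists (a i (tQ p)); last by rewrite /psif /phi pQ.
      by rewrite inE a_in ?tQ_in // e2 a_in ?tQ_in.
    * by case: ifP => _ /E_inj => /(_ isT isT r0 (hri j) w0 hp') [].
    * by case: ifP => _ /E_inj => /(_ isT isT (hri i) r0 hp w0) [].
    * case: ifP => _; case: ifP => _ /E_inj => /(_ isT isT (hri i) (hri j) hp hp') [] //;
        by move=> _ _ /val_inj eij; rewrite eij eqxx in ij.
  + case=> y; rewrite inE => /andP[yi yj] ->.
    have mem (k : 'I_r) : y \in A k -> pif y \in [set psif k p | p : 'I_w].
      move=> yk; have : pif y \in selected Q [set psif k p | p : 'I_w].
        by rewrite selE; apply/imsetP; exists y.
      by rewrite /selected inE => /andP[].
    by split; apply: mem.
Qed.
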